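(* Let $\psi:\mathbb{N}\to[1,\infty)$ be a function with $\psi(n)\to\infty$ and $\log\psi(n)/\log n\to 0$ as $n\to\infty$, and let $d=d(n)$ be positive integers with $d\geq n/\psi(n)$. Then, as $n\to\infty$, $$p_d(n+1)\geq n^{\big(n+\frac{n\log d}{\psi(n)\log n}\big)(1+o(1))},$$ and consequently, if moreover $\frac{\log d}{\psi(n)\log n}\to 0$ as $n\to\infty$, then $p_d(n)\geq n^{n+o(n)}$.
   Context: $\mathbb{Z}_+=\{0,1,2,\dots\}$. A set $S\subset\mathbb{Z}_+^d$ is a lower set if whenever $\mathbf{x}\in S$ and $\mathbf{x}'\in\mathbb{Z}_+^d$ satisfies $x'_i\leq x_i$ for all $i$, then $\mathbf{x}'\in S$. $p_d(n)$ denotes the number of lower sets in $\mathbb{Z}_+^d$ with exactly $n$ points. $\log$ is the natural logarithm. *)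

(* Defs.v *)
From mathcomp Require Import all_boot.
Set Implicit Arguments. Unset Strict Implicit. Unset Printing Implicit Defensive.

Definition box (d n : nat) := {ffun 'I_d -> 'I_n}.

(* Since the box is itself down-closed in Z_+^d, for
   S contained in the box this is exactly the lower-set condition in Z_+^d. *)
Definition is_lower (d n : nat) (S : {set box d n}) : bool :=
  [forall x : box d n, (x \in S) ==>
     [forall y : box d n, [forall i, (y i <= x i)%N] ==> (y \in S)]].

(* Every point x of a lower set of size n satisfies x_i < n (the chain
   x - k e_i, k = 0..x_i, lies in the set), so all such sets live in
   the box {0,...,n-1}^d and we may count them there. *)
Definition p (d n : nat) : nat :=
  #|[set S : {set box d n} | is_lower S && (#|S| == n)]|.

(* Main.v *)
Require Import Defs.
From mathcomp Require Import all_boot.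
From mathcomp Require Import zify.
Set Implicit Arguments. Unset Strict Implicit.

Lemma leq_pow2r m n e : m <= n -> m ^ e <= n ^ e.
Proof. by case: e => [//|e] H; rewrite leq_exp2r. Qed.

Lemma fact_le_pow b : b`! <= b ^ b.
Proof.
elim: b => [//|b IH]. rewrite factS expnS.
apply: leq_mul => //. apply: (leq_trans IH). apply: leq_pow2r => //.
Qed.

Lemma ffact_ge a b : (a - b) ^ b <= a ^_ b.
Proof.
elim: b a => [|b IH] a; first by rewrite ffactn0 expn0.
rewrite ffactnS expnS. apply: leq_mul; first by apply: leq_subr.
apply: leq_trans (IH a.-1). apply: leq_pow2r. lia.
Qed.

Lemma binom_lb a b : (a - b) ^ b <= 'C(a, b) * b ^ b.
Proof.
apply: leq_trans (ffact_ge a b) _. rewrite -bin_ffact. apply: leq_mul => //.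
exact: fact_le_pow.
Qed.

Definition one' N' : 'I_N'.+2 := @Ordinal N'.+2 1 isT.
Definition ind d N' (F : {set 'I_d}) : {ffun 'I_d -> 'I_N'.+2} :=
  [ffun i => if i \in F then one' N' else ord0].
Definition supp d N (x : {ffun 'I_d -> 'I_N}) : {set 'I_d} := [set i | (x i != 0 :> nat)].
Definition good d N' (K : {set 'I_d}) (E : {set {set 'I_d}}) (x : {ffun 'I_d -> 'I_N'.+2}) : bool :=
 [forall i, x i <= 1] && ((supp x \subset K) && ((#|supp x| <= 1) || (supp x \in E))).
Definition Sset d N' (K : {set 'I_d}) (E : {set {set 'I_d}}) : {set {ffun 'I_d -> 'I_N'.+2}} :=
  [set x | good K E x].

Lemma supp_ind d N' F : supp (@ind d N' F) = F.
Proof. apply/setP => i; rewrite !inE ffunE; by case: (i \in F). Qed.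

Lemma ind_inj d N' : injective (@ind d N').
Proof. by move=> F G H; rewrite -(supp_ind N' F) H supp_ind. Qed.

Lemma ind_supp d N' (x : {ffun 'I_d -> 'I_N'.+2}) : [forall i, x i <= 1] -> ind N' (supp x) = x.
Proof.
move/forallP=> H; apply/ffunP => i; rewrite ffunE inE; apply: val_inj => /=.
have := H i. case: (x i) => [[|[|k]] Hk] //=.
Qed.

Lemma ind_le1 d N' F : [forall i, @ind d N' F i <= 1].
Proof. apply/forallP => i; rewrite ffunE; by case: (i \in F). Qed.

Lemma in_Sset_ind d N' K E F :
  (@ind d N' F \in Sset N' K E) = (F \subset K) && ((#|F| <= 1) || (F \in E)).
Proof. by rewrite inE /good ind_le1 supp_ind. Qed.

Definition goodE d (K : {set 'I_d}) (E : {set {set 'I_d}}) :=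
  E \subset [set F : {set 'I_d} | F \subset K & #|F| == 2].

Lemma Sset_lower d N' K E : goodE K E -> is_lower (@Sset d N' K E).
Proof.
move=> hE; apply/forallP => x; apply/implyP => Hx; apply/forallP => y;
apply/implyP => /forallP Hyx.
move: Hx; rewrite !inE /good => /and3P [/forallP H1 H2 H3].
have Hs : supp y \subset supp x.
  apply/subsetP => i; rewrite !inE; have := Hyx i; lia.
idtac; apply/and3P; split.
- apply/forallP => i; have := Hyx i; have := H1 i; lia.
- exact: subset_trans Hs H2.
- case: (leqP #|supp y| 1) => //= Hy.
  case/orP: H3 => [Hx1|HxE].
  + have H := subset_leq_card Hs. have := leq_trans H Hx1. by rewrite leqNgt Hy.
  + have := subsetP hE _ HxE; rewrite inE => /andP [_ /eqP Hc].
    have : supp y == supp x by rewrite eqEcard Hs Hc.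
    by move/eqP ->.
Qed.

Lemma Sset_eq d N' K E :
  @Sset d N' K E = ind N' @: (set0 |: ([set [set i] | i in K] :|: [set F : {set 'I_d} | (F \in E) && (F \subset K)])).
Proof.
apply/setP => x; apply/idP/idP.
- rewrite inE /good => /and3P [H1 H2 H3]; rewrite -(ind_supp H1).
  apply: imset_f. rewrite !inE.
  case/orP: H3 => [H3|->]; last by rewrite H2 !orbT.
  move: H3; rewrite leq_eqVlt ltnS leqn0 => /orP [/cards1P [i Hi]| /eqP /cards0_eq ->].
  + rewrite Hi; apply/orP; right; apply/orP; left; apply: imset_f.
    by rewrite -sub1set -Hi.
  + by rewrite eqxx.
- case/imsetP => F HF ->; rewrite in_Sset_ind.
  move: HF; rewrite !inE => /orP [/eqP ->|/orP [/imsetP [i Hi ->] | /andP [HE HK]]].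
  + by rewrite sub0set cards0.
  + by rewrite sub1set Hi cards1.
  + by rewrite HK HE orbT.
Qed.

Lemma card_Sset d N' K E : goodE K E -> #|@Sset d N' K E| = (1 + #|K| + #|E|).
Proof.
move=> hE; rewrite Sset_eq card_imset; last exact: ind_inj.
have -> : [set F : {set 'I_d} | (F \in E) && (F \subset K)] = E.
  apply/setP => F; rewrite inE; case HF: (F \in E) => //=.
  by have := subsetP hE _ HF; rewrite inE => /andP [].
rewrite cardsU1 cardsU.
have -> : [set [set i] | i in K] :&: E = set0.
  apply/setP => F; rewrite in_setI in_set0; apply/negP => /andP [/imsetP [i _ ->] HE].
  by have := subsetP hE _ HE; rewrite inE cards1 => /andP [].
rewrite cards0 subn0 card_imset; last exact: set1_inj.
have -> : (set0 \notin [set [set i] | i in K] :|: E) = true.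
  rewrite in_setU negb_or; apply/andP; split.
  - apply/imsetP => [[i _ H]]. have := cards1 i. by rewrite -H cards0.
  - apply/negP => HE. by have := subsetP hE _ HE; rewrite inE cards0 => /andP [].
by rewrite addnA.
Qed.

Lemma Sset_inj d N' K E K' E' : goodE K E -> goodE K' E' ->
  @Sset d N' K E = Sset N' K' E' -> K = K' /\ E = E'.
Proof.
move=> hE hE' H.
have HK : forall K E, goodE K E -> K = [set i | ind N' [set i] \in @Sset d N' K E].
  move=> K0 E0 _; apply/setP => i. rewrite [in RHS]in_set in_Sset_ind sub1set cards1 /=. by rewrite andbT.
have HE : forall K E, goodE K E -> E = [set F | (ind N' F \in @Sset d N' K E) && (#|F| == 2)].
  move=> K0 E0 h; apply/setP => F; rewrite inE in_Sset_ind.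
  case HF: (F \in E0).
  - by have := subsetP h _ HF; rewrite inE => /andP [-> /eqP ->]; rewrite orbT.
  - rewrite orbF andbC; case: eqP => [->|] //=; by rewrite andbF.
split; [rewrite (HK _ _ hE) (HK _ _ hE') H | rewrite (HE _ _ hE) (HE _ _ hE') H] => //.
Qed.

Lemma p_lb d N' k0 k1 m : k0 <= d -> k0 + k1 + m = N'.+1 ->
  'C(d - k0, k1) * 'C('C(k0, 2), m) <= p d N'.+2.
Proof.
move=> Hk Hsum.
set K0 := [set i : 'I_d | i < k0].
have cK0 : #|K0| = k0.
  have -> : K0 = widen_ord Hk @: [set: 'I_k0].
    apply/setP => i; rewrite inE; apply/idP/imsetP.
    - move=> Hi; exists (Ordinal Hi) => //; exact: val_inj.
    - by case=> j _ ->; rewrite /= ltn_ord.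
  by rewrite card_imset ?cardsT ?card_ord //; move=> a b /(congr1 val) /= Hab; exact: val_inj.
have cC : #|~: K0| = d - k0 by rewrite cardsCs setCK card_ord cK0.
set P := [set F : {set 'I_d} | F \subset K0 & #|F| == 2].
set D1 := [set K1 : {set 'I_d} | K1 \subset ~: K0 & #|K1| == k1].
set D2 := [set E : {set {set 'I_d}} | E \subset P & #|E| == m].
have c1 : #|D1| = 'C(d - k0, k1) by rewrite cards_draws cC.
have c2 : #|D2| = 'C('C(k0, 2), m) by rewrite cards_draws cards_draws cK0.
rewrite -c1 -c2 -cardsX.
pose f (q : {set 'I_d} * {set {set 'I_d}}) := Sset N' (K0 :|: q.1) q.2.
have good_q : forall q, q \in setX D1 D2 -> goodE (K0 :|: q.1) q.2.
  move=> [K1 E]; rewrite !inE /= => /andP [/andP [HK1 _] /andP [HE _]].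
  apply: subset_trans HE _; apply/subsetP => F; rewrite !inE => /andP [HF ->]; rewrite andbT.
  exact: subset_trans HF (subsetUl _ _).
have finj : {in setX D1 D2 &, injective f}.
  move=> [K1 E] [K1' E'] Hq Hq' Hf.
  have [/= HK HE] := Sset_inj (good_q _ Hq) (good_q _ Hq') Hf.
  move: Hq Hq'; rewrite !inE /= => /andP [/andP [HK1 _] _] /andP [/andP [HK1' _] _].
  have recover : forall X : {set 'I_d}, X \subset ~: K0 -> X = (K0 :|: X) :&: ~: K0.
    move=> X HX; rewrite setIUl setICr set0U; apply/esym/setIidPl. exact HX.
  by rewrite (recover _ HK1) (recover _ HK1') HK HE.
rewrite -(card_in_imset finj) /p; apply: subset_leq_card; apply/subsetP => S /imsetP [q Hq ->].
rewrite inE Sset_lower ?good_q //= card_Sset ?good_q //.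
move: Hq; case: q => K1 E; rewrite !inE /= => /andP [/andP [HK1 /eqP cK1] /andP [_ /eqP cE]].
rewrite cardsU cK0 cK1 cE.
have -> : K0 :&: K1 = set0.
  apply/setP => i; rewrite in_setI in_set0; apply/negP => /andP [H0 H1].
  by move: (subsetP HK1 _ H1); rewrite in_setC H0.
rewrite cards0 subn0. apply/eqP; lia.
Qed.

Unset Implicit Arguments.
From Stdlib Require Import Reals.
From Coquelicot Require Import Coquelicot.
From Stdlib Require Import ZArith Lra Lia.
Open Scope R_scope.


Lemma INR_muln a b : INR (muln a b) = INR a * INR b.
Proof. change (INR (Nat.mul a b) = INR a * INR b); apply mult_INR. Qed.

Lemma INR_expn a b : INR (expn a b) = INR a ^ b.
Proof. elim: b => [//|b IH]. by rewrite expnS INR_muln IH. Qed.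

Lemma INR_leq a b : (a <= b)%nat -> INR a <= INR b.
Proof. move/leP; exact: le_INR. Qed.

Lemma ln_binom a b : (1 <= b)%nat -> (b < a)%nat ->
  INR b * (ln (INR (a - b)) - ln (INR b)) <= ln (INR 'C(a, b)) /\ 1 <= INR 'C(a, b).
Proof.
move=> Hb Hab.
have HC : 1 <= INR 'C(a, b) by apply: (INR_leq 1); rewrite bin_gt0 ltnW.
have Hab' : 1 <= INR (a - b). apply: (INR_leq 1).  lia.
have Hb' : 1 <= INR b by apply: (INR_leq 1).
split => //.
have H := INR_leq _ _ (binom_lb a b). rewrite INR_muln !INR_expn in H.
have Hpos : 0 < INR (a - b) by lra.
have := ln_le _ _ (pow_lt _ b Hpos) H.
rewrite ln_mult ?ln_pow; try lra; try apply: pow_lt; try lra.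
Qed.

Lemma bin2_mul k : (muln 'C(k, 2) 2 = muln k k.-1)%nat.
Proof.
have := bin_ffact k 2. rewrite ffactnS ffactn1 => <-. by [].
Qed.

Lemma graph_bound (x psi : R) (k0 m : nat) :
  1 <= psi -> 16 * psi^2 <= x -> x / psi <= INR k0 -> INR m <= x ->
  1 <= x - 2*x/psi - 3 -> x - 2*x/psi - 3 <= INR m ->
  (x - 2*x/psi - 3) * (ln x - 2 * ln psi - 2 * ln 4) <= ln (INR 'C('C(k0,2), m))
  /\ 1 <= INR 'C('C(k0,2), m).
Proof.
move=> Hpsi Hx Hk Hm1 Hl Hm2.
set y := x / psi in Hk *.
have Hxpos : 0 < x by nra.
have Hy : y * psi = x by rewrite /y; field; lra.
have Hy16 : 16 * psi <= y.
  apply: (Rmult_le_reg_r psi); first lra. rewrite Hy. nra.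
have Hk1 : leq (S O) k0 by apply/leP; apply: INR_le; simpl; lra.
set a0 := 'C(k0, 2).
have Ha0 : 2 * INR a0 = INR k0 * (INR k0 - 1).
  have := f_equal INR (bin2_mul k0). rewrite !INR_muln.
  have -> : INR k0.-1 = INR k0 - 1.
    rewrite -(minus_INR k0 1); last by apply/leP.
    congr INR; lia.
  rewrite (_ : INR 2 = 2); last by simpl; ring.
  rewrite /a0; lra.
have Ha0y : y * y / 8 <= INR a0 by nra.
have Hyx : x <= y * y / 16.
  have : x * 16 * psi * psi <= x * x by nra.
  move=> H. rewrite -Hy in H. 
  have Hp2 : 0 < psi * psi by nra.
  nra.
have Ham : y * y / 16 <= INR a0 - INR m by lra.
have Hmlt : leq (S m) a0 by apply/ltP; apply: INR_lt; lra.
have Hm1n : leq (S O) m by apply/leP; apply: INR_le; simpl; lra.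
have [Hb HC] := ln_binom a0 m Hm1n Hmlt.
split => //.
have Hsub : INR (a0 - m) = INR a0 - INR m.
  rewrite -minus_INR; last by apply/leP; apply: ltnW.
  done.
rewrite Hsub in Hb.
have Hlnam : 2 * (ln x - ln psi - ln 4) <= ln (INR a0 - INR m).
  have Hq : y * y / 16 = (x / (psi * 4)) ^ 2 by rewrite /y; field; lra.
  have H1 : 0 < x / (psi * 4) by apply: Rdiv_lt_0_compat; lra.
  have := ln_le _ _ (pow_lt _ 2 H1) (Rle_trans _ _ _ (Req_le _ _ (esym Hq)) Ham).
  rewrite ln_pow // ln_div ?ln_mult; try lra. simpl. lra.
have Hlnm : ln (INR m) <= ln x by apply: ln_le; lra.
have HF : 0 <= ln x - 2 * ln psi - 2 * ln 4.
  have Hq : 16 * psi ^ 2 = (psi * 4) ^ 2 by ring.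
  have Hp : 0 < 16 * psi ^ 2 by nra.
  have := ln_le _ _ Hp Hx. rewrite Hq ln_pow ?ln_mult; try lra. simpl. lra.
have : (x - 2*x/psi - 3) * (ln x - 2 * ln psi - 2 * ln 4) <=
       INR m * (ln x - 2 * ln psi - 2 * ln 4) by apply: Rmult_le_compat_r.
have : INR m * (ln x - 2 * ln psi - 2 * ln 4) <= INR m * (ln (INR a0 - INR m) - ln (INR m)).
  apply: Rmult_le_compat_l; lra.
lra.
Qed.

Lemma alg1 (x L psi lpsi l4 lD eta : R) :
  0 < eta -> eta <= 1/9 -> 1 / eta <= psi -> 0 <= lpsi -> lpsi <= eta * L ->
  3 <= eta * x -> 0 <= l4 -> l4 <= eta * L -> 0 <= lD -> 0 < x -> 0 < L ->
  (1 - 9 * eta) * (x * L + x * lD / psi) <=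
  (x - 2 * x / psi - 3) * (L - 2 * lpsi - 2 * l4) + x * lD / psi - x * (l4 + L) / psi.
Proof.
move=> He He9 Hpsi Hl0 Hl Hx3 H40 H4 HD Hx HL.
have Hpsi0 : 0 < psi.
  apply: Rlt_le_trans Hpsi. apply: Rdiv_lt_0_compat; lra.
set u := / psi.
have Hu0 : 0 < u by apply: Rinv_0_lt_compat.
have Hu : u <= eta.
  rewrite /u. have : eta * psi >= 1.
    have := Rmult_le_compat_l eta _ _ (Rlt_le _ _ He) Hpsi.
    rewrite /Rdiv Rmult_1_l Rinv_r; lra.
  move=> H. apply: (Rmult_le_reg_r psi) => //. rewrite Rinv_l; lra.
have E1 : x / psi = x * u by [].
have E2 : 2 * x / psi = 2 * x * u by [].
have E3 : x * lD / psi = x * lD * u by [].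
have E4 : x * (l4 + L) / psi = x * (l4 + L) * u by [].
rewrite E2 E3 E4.
have s1 : x * (1 - 3 * eta) <= x - 2 * x * u - 3 by nra.
have s2 : L * (1 - 4 * eta) <= L - 2 * lpsi - 2 * l4 by lra.
have s1' : 0 <= x * (1 - 3 * eta) by nra.
have s2' : 0 <= L * (1 - 4 * eta) by nra.
have s3 : x * (1 - 3 * eta) * (L * (1 - 4 * eta)) <=
          (x - 2 * x * u - 3) * (L - 2 * lpsi - 2 * l4).
  apply: Rmult_le_compat => //.
have s4 : x * (l4 + L) * u <= 2 * eta * x * L.
  have : (l4 + L) * u <= 2 * eta * L by nra.
  nra.
have s5 : x * L * (1 - 7 * eta) <= x * (1 - 3 * eta) * (L * (1 - 4 * eta)).
  have : 0 <= x * L * (12 * eta * eta) by have := Rmult_lt_0_compat _ _ Hx HL; nra.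
  nra.
have s6 : 0 <= x * lD * u by apply: Rmult_le_pos; [nra|lra].
nra.
Qed.

Lemma k1_bound (x psi : R) (D k0 : nat) :
  1 <= psi -> 2 <= x -> x / psi <= INR k0 -> INR k0 <= x -> 4 * x <= INR D ->
  x * ln (INR D) / psi - x * (ln 4 + ln x) / psi <= ln (INR 'C(subn D k0, k0))
  /\ 1 <= INR 'C(subn D k0, k0).
Proof.
move=> Hpsi Hx Hk1 Hk2 HD.
have Hpsi0 : 0 < psi by lra.
have Hy : 0 < x / psi by apply: Rdiv_lt_0_compat; lra.
have Hk0 : leq (S O) k0 by apply/ltP; apply: INR_lt; simpl; lra.
have HDk : (k0 <= D)%coq_nat by apply: INR_le; lra.
have Hsub : INR (subn D k0) = INR D - INR k0 by rewrite -minus_INR.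
have Hlt : leq (S k0) (subn D k0) by apply/ltP; apply: INR_lt; rewrite Hsub; lra.
have [Hb HC] := ln_binom _ _ Hk0 Hlt.
split => //.
have Hsub2 : INR (subn (subn D k0) k0) = INR D - 2 * INR k0.
  have Hle : (k0 <= subn D k0)%coq_nat by apply: INR_le; rewrite Hsub; lra.
  have -> : INR (subn (subn D k0) k0) = INR (subn D k0) - INR k0 by rewrite -minus_INR.
  by rewrite Hsub; ring.
rewrite Hsub2 in Hb.
have H1 : ln (INR D) - ln 2 <= ln (INR D - 2 * INR k0).
  rewrite -ln_div; try lra. apply: ln_le; first by apply: Rdiv_lt_0_compat; lra.
  lra.
have H2 : ln 2 <= ln 4 by apply: ln_le; lra.
have H3 : ln (INR k0) <= ln x by apply: ln_le; lra.
have H4 : ln 4 + ln x <= ln (INR D).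
  rewrite -ln_mult; try lra. apply: ln_le; lra.
have E : x * ln (INR D) / psi - x * (ln 4 + ln x) / psi =
         (x / psi) * (ln (INR D) - ln 4 - ln x) by field; lra.
rewrite E.
have : x / psi * (ln (INR D) - ln 4 - ln x) <= INR k0 * (ln (INR D) - ln 4 - ln x).
  apply: Rmult_le_compat_r; lra.
have : INR k0 * (ln (INR D) - ln 4 - ln x) <=
       INR k0 * (ln (INR D - 2 * INR k0) - ln (INR k0)).
  apply: Rmult_le_compat_l; lra.
lra.
Qed.

Lemma small_D (x psi : R) (D : nat) :
  1 <= psi -> 1 <= x -> (1 <= D)%coq_nat -> INR D <= 4 * x ->
  x * ln (INR D) / psi - x * (ln 4 + ln x) / psi <= 0.
Proof.
move=> Hpsi Hx HD HDx.
have HD' : 1 <= INR D by apply: (le_INR 1).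
have H4 : ln (INR D) <= ln 4 + ln x.
  rewrite -ln_mult; try lra. apply: ln_le; lra.
have E : x * ln (INR D) / psi - x * (ln 4 + ln x) / psi =
         (x / psi) * (ln (INR D) - ln 4 - ln x) by field; lra.
rewrite E.
have Hy : 0 < x / psi by apply: Rdiv_lt_0_compat; lra.
nra.
Qed.

Lemma det_gen (n D N' k0 k1 : nat) (psi eta : R) :
  0 < eta -> eta <= 1/9 -> 1 <= psi -> ln psi <= eta * ln (INR n) -> 4 <= psi ->
  16 <= INR n -> ln 4 <= eta * ln (INR n) ->
  INR n / psi <= INR k0 -> INR k0 <= INR n / psi + 1 -> (k0 <= D)%coq_nat ->
  INR k1 <= INR n / psi + 1 -> (N' + 1 <= n)%coq_nat -> (n <= N' + 2)%coq_nat ->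
  1 <= INR 'C(subn D k0, k1) ->
  1 <= INR (p D N'.+2) /\
  ln (INR 'C(subn D k0, k1)) +
    (INR n - 2 * INR n / psi - 3) * (ln (INR n) - 2 * ln psi - 2 * ln 4)
  <= ln (INR (p D N'.+2)).
Proof.
move=> He He9 Hpsi Hlpsi Hpsi4 Hx16 Hl4 Hk0a Hk0b HkD Hk1 HN1 HN2 HC1.
set x := INR n in Hlpsi Hx16 Hl4 Hk0a Hk0b Hk1 *.
have Hpsi0 : 0 < psi by lra.
have HL : 0 < ln x by rewrite -ln_1; apply: ln_increasing; lra.
have Hxpsi : x / psi <= x / 4.
  apply: Rmult_le_compat_l; first lra. apply: Rinv_le_contravar; lra.
have Hxpsi0 : 0 <= x / psi by apply: Rlt_le; apply: Rdiv_lt_0_compat; lra.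
have H16 : 16 * psi ^ 2 <= x.
  case: (Rle_lt_dec (16 * psi ^ 2) x) => // Hlt.
  have Hx0 : 0 < x by lra.
  have := ln_increasing _ _ Hx0 Hlt.
  have -> : 16 * psi ^ 2 = (4 * psi) ^ 2 by ring.
  rewrite ln_pow; last lra. rewrite ln_mult; try lra. simpl. have : eta * ln x <= ln x / 9 by nra. lra.
have Hsum : (k0 + k1 <= N' + 1)%coq_nat.
  apply: INR_le. rewrite plus_INR plus_INR.
  have : INR N' + 1 >= x - 1.
    have := le_INR _ _ HN2. rewrite plus_INR. simpl. rewrite /x. lra.
  simpl. lra.
set m := subn (N' + 1)%coq_nat (k0 + k1)%coq_nat.
have Hm : INR m = INR N' + 1 - INR k0 - INR k1.
  have -> : INR m = INR (N' + 1) - INR (k0 + k1) by apply: minus_INR.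
  rewrite !plus_INR /=; ring.
have HN' : INR N' + 1 <= x by have := le_INR _ _ HN1; rewrite plus_INR /= /x; lra.
have HN'' : x <= INR N' + 2 by have := le_INR _ _ HN2; rewrite plus_INR /= /x; lra.
have Hk1p := pos_INR k1.
have E2 : 2 * x / psi = 2 * (x / psi) by field; lra.
have Hm1 : INR m <= x by lra.
have Hm2 : 1 <= x - 2 * x / psi - 3 by lra.
have Hm3 : x - 2 * x / psi - 3 <= INR m by lra.
have [Hg HC2] := graph_bound x psi k0 m Hpsi H16 Hk0a Hm1 Hm2 Hm3.
have Hp := @p_lb D N' k0 k1 m ltac:(apply/leP; exact HkD) ltac:(rewrite /m; lia).
have HpR := INR_leq _ _ Hp. rewrite INR_muln in HpR.
have HC12 : 1 <= INR 'C(subn D k0, k1) * INR 'C('C(k0, 2), m) by nra.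
split; first lra.
have Hc0 : 0 < INR 'C(subn D k0, k1) * INR 'C('C(k0, 2), m) by lra.
have := ln_le _ _ Hc0 HpR. rewrite ln_mult; lra.
Qed.

Lemma pick_k0 (r : R) (D : nat) : 0 <= r -> r <= INR D ->
  exists k0, (k0 <= D)%coq_nat /\ r <= INR k0 /\ INR k0 <= r + 1.
Proof.
move=> Hr HD.
have [Hu1 Hu2] := archimed r.
have Hz : (0 <= up r)%Z by apply: le_IZR; lra.
set c := Z.to_nat (up r).
have Hc : INR c = IZR (up r) by rewrite INR_IZR_INZ /c Z2Nat.id.
case: (Nat.le_gt_cases c D) => H.
- exists c; split => //; lra.
- exists D; split => //; split => //. have := lt_INR _ _ H. lra.
Qed.

Lemma det1 (n D : nat) (psi eta : R) :
  0 < eta -> eta <= 1/9 -> 1 <= psi -> ln psi <= eta * ln (INR n) -> 1 / eta <= psi ->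
  4 <= psi -> 3 <= eta * INR n -> 16 <= INR n -> ln 4 <= eta * ln (INR n) ->
  INR n / psi <= INR D -> (1 <= D)%coq_nat ->
  1 <= INR (p D n.+1) /\
  (1 - 9 * eta) * (INR n * ln (INR n) + INR n * ln (INR D) / psi) <= ln (INR (p D n.+1)).
Proof.
move=> He He9 Hpsi Hlpsi Hpe Hpsi4 Hx3 Hx16 Hl4 HD HD1.
have Hxpsi0 : 0 <= INR n / psi by apply: Rlt_le; apply: Rdiv_lt_0_compat; lra.
have Hxpsi : INR n / psi <= INR n / 4.
  apply: Rmult_le_compat_l; first lra. apply: Rinv_le_contravar; lra.
have [k0 [HkD [Hk0a Hk0b]]] := pick_k0 _ _ Hxpsi0 HD.
have [k1 [Hk1 [HC1a HC1b]]] : exists k1, INR k1 <= INR n / psi + 1 /\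
   INR n * ln (INR D) / psi - INR n * (ln 4 + ln (INR n)) / psi
     <= ln (INR 'C(subn D k0, k1)) /\ 1 <= INR 'C(subn D k0, k1).
  case: (Rle_lt_dec (4 * INR n) (INR D)) => H4.
  - exists k0; split => //.
    apply: k1_bound => //; lra.
  - exists 0%nat; split; first by simpl; lra.
    rewrite bin0 /= ln_1; split; last lra.
    apply: small_D => //; lra.
have Hn1 : (1 <= n)%coq_nat by apply: INR_le; simpl; lra.
have [Hp1 Hp2] := @det_gen n D (n - 1) k0 k1 psi eta He He9 Hpsi Hlpsi Hpsi4 Hx16 Hl4
   Hk0a Hk0b HkD Hk1 ltac:(lia) ltac:(lia) HC1b.
have -> : n.+1 = (n - 1).+2 by lia.
split => //.
have HL : 0 < ln (INR n) by rewrite -ln_1; apply: ln_increasing; lra.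
have Hl40 : 0 <= ln 4 by rewrite -ln_1; apply: ln_le; lra.
have Hlp0 : 0 <= ln psi by rewrite -ln_1; apply: ln_le; lra.
have HlD0 : 0 <= ln (INR D).
  rewrite -ln_1; apply: ln_le; first lra. by apply: (le_INR 1).
have := alg1 (INR n) (ln (INR n)) psi (ln psi) (ln 4) (ln (INR D)) eta He He9 Hpe Hlp0 Hlpsi Hx3 Hl40 Hl4 HlD0 ltac:(lra) HL.
lra.
Qed.

Lemma det2 (n D : nat) (psi eta : R) :
  0 < eta -> eta <= 1/9 -> 1 <= psi -> ln psi <= eta * ln (INR n) -> 1 / eta <= psi ->
  4 <= psi -> 3 <= eta * INR n -> 16 <= INR n -> ln 4 <= eta * ln (INR n) ->
  INR n / psi <= INR D -> (1 <= D)%coq_nat ->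
  1 <= INR (p D n) /\
  (1 - 9 * eta) * (INR n * ln (INR n)) <= ln (INR (p D n)).
Proof.
move=> He He9 Hpsi Hlpsi Hpe Hpsi4 Hx3 Hx16 Hl4 HD HD1.
have Hxpsi0 : 0 <= INR n / psi by apply: Rlt_le; apply: Rdiv_lt_0_compat; lra.
have [k0 [HkD [Hk0a Hk0b]]] := pick_k0 _ _ Hxpsi0 HD.
have HC1 : 1 <= INR 'C(subn D k0, 0) by rewrite bin0 /=; lra.
have Hk1 : INR 0 <= INR n / psi + 1 by simpl; lra.
have Hn1 : (2 <= n)%coq_nat by apply: INR_le; simpl; lra.
have [Hp1 Hp2] := @det_gen n D (n - 2) k0 0 psi eta He He9 Hpsi Hlpsi Hpsi4 Hx16 Hl4
   Hk0a Hk0b HkD Hk1 ltac:(lia) ltac:(lia) HC1.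
have Hn : (n - 2).+2 = n by lia.
rewrite Hn in Hp1 Hp2.
split => //.
move: Hp2. rewrite bin0 /= ln_1.
have HL : 0 < ln (INR n) by rewrite -ln_1; apply: ln_increasing; lra.
have Hl40 : 0 <= ln 4 by rewrite -ln_1; apply: ln_le; lra.
have Hlp0 : 0 <= ln psi by rewrite -ln_1; apply: ln_le; lra.
have := alg1 (INR n) (ln (INR n)) psi (ln psi) (ln 4) 0 eta He He9 Hpe Hlp0 Hlpsi Hx3 Hl40 Hl4 ltac:(lra) ltac:(lra) HL.
have -> : INR n * 0 / psi = 0 by field; lra.
have : 0 <= INR n * (ln 4 + ln (INR n)) / psi.
  apply: Rmult_le_pos; last by apply: Rlt_le; apply: Rinv_0_lt_compat; lra.
  apply: Rmult_le_pos; lra.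
lra.
Qed.

Lemma EF (psi : nat -> R) :
  (forall n : nat, 1 <= psi n) -> is_lim_seq psi p_infty ->
  is_lim_seq (fun n => ln (psi n) / ln (INR n)) 0 ->
  forall eta, 0 < eta -> exists N, forall n, (N <= n)%coq_nat ->
    ln (psi n) <= eta * ln (INR n) /\ 1 / eta <= psi n /\ 4 <= psi n /\
    3 <= eta * INR n /\ 16 <= INR n /\ ln 4 <= eta * ln (INR n).
Proof.
move=> H1 Hinf Hslow eta He.
have /is_lim_seq_spec Hs := Hslow.
have /is_lim_seq_spec Hi := Hinf.
have /is_lim_seq_spec Hn := is_lim_seq_INR.
have E1 := Hs (mkposreal eta He).
have E2 := Hi (1 / eta + 4).
have E3 := Hn (3 / eta + 16 + exp (ln 4 / eta)).
have [N HN] := filter_and _ _ E1 (filter_and _ _ E2 E3).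
exists N => n /HN /= [Ha [Hb Hc]].
have Hexp := exp_pos (ln 4 / eta).
have Hdiv : 0 < 1 / eta by apply: Rdiv_lt_0_compat; lra.
have Hdiv3 : 0 < 3 / eta by apply: Rdiv_lt_0_compat; lra.
have Hx16 : 16 <= INR n by lra.
have HL : 0 < ln (INR n) by rewrite -ln_1; apply: ln_increasing; lra.
have HL4 : ln 4 / eta < ln (INR n).
  rewrite -(ln_exp (ln 4 / eta)). apply: ln_increasing => //; lra.
split.
  have := Rle_abs (ln (psi n) / ln (INR n) - 0). 
  move=> H. have H' : ln (psi n) / ln (INR n) < eta by lra.
  have -> : ln (psi n) = (ln (psi n) / ln (INR n)) * ln (INR n) by field; lra.
  nra.
split; first lra.
split; first lra.
split.
  have : 3 / eta * eta = 3 by field; lra.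
  nra.
split => //.
have : ln 4 / eta * eta = ln 4 by field; lra.
nra.
Qed.

Lemma gen (P : nat -> nat) (A : nat -> R) :
  (forall n, (2 <= n)%coq_nat -> INR n <= A n) ->
  (forall del, 0 < del -> exists N, forall n, (N <= n)%coq_nat ->
      1 <= INR (P n) /\ (1 - del) * (A n * ln (INR n)) <= ln (INR (P n))) ->
  exists eps : nat -> R, is_lim_seq eps 0 /\
    exists N, forall n, (N <= n)%coq_nat -> Rpower (INR n) (A n * (1 + eps n)) <= INR (P n).
Proof.
move=> HA Hmain.
have [N1 HN1] := Hmain (1/2) ltac:(lra).
set N := Nat.max N1 2.
pose eps n := if Nat.leb N n then Rmin 0 (ln (INR (P n)) / (A n * ln (INR n)) - 1) else 0.
have Hpos : forall n, (N <= n)%coq_nat -> 0 < A n * ln (INR n) /\ 1 <= INR (P n).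
  move=> n Hn.
  have Hn2 : (2 <= n)%coq_nat by lia.
  have H2 : 2 <= INR n by apply: (le_INR 2).
  have := HA n Hn2. have HL : 0 < ln (INR n) by rewrite -ln_1; apply: ln_increasing; lra.
  move=> HAn; split; first by apply: Rmult_lt_0_compat; lra.
  by have [] := HN1 n ltac:(lia).
exists eps; split.
- apply/is_lim_seq_spec => e.
  have [N2 HN2] := Hmain (e / 2) ltac:(have := cond_pos e; lra).
  exists (Nat.max N N2) => n Hn.
  have [HAL HP] := Hpos n ltac:(lia).
  have [_ Hb] := HN2 n ltac:(lia).
  rewrite /eps. have -> : Nat.leb N n = true by apply/Nat.leb_le; lia.
  have Hr : 1 - e / 2 <= ln (INR (P n)) / (A n * ln (INR n)).
    apply: (Rmult_le_reg_r (A n * ln (INR n))) => //.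
    rewrite /Rdiv Rmult_assoc Rinv_l; lra.
  have := cond_pos e.
  rewrite Rminus_0_r. unfold Rmin. case: Rle_dec => H; rewrite Rabs_left1; lra.
- exists N => n Hn.
  have [HAL HP] := Hpos n Hn.
  rewrite /eps. have -> : Nat.leb N n = true by apply/Nat.leb_le; lia.
  have H2 : 2 <= INR n by apply: (le_INR 2); lia.
  have HL : 0 < ln (INR n) by rewrite -ln_1; apply: ln_increasing; lra.
  have HAn := HA n ltac:(lia).
  apply: Rle_trans (Rle_Rpower (INR n) _ (ln (INR (P n)) / ln (INR n)) ltac:(lra) _) _.
  + have Hm := Rmin_l 0 (ln (INR (P n)) / (A n * ln (INR n)) - 1).
    have Hm' := Rmin_r 0 (ln (INR (P n)) / (A n * ln (INR n)) - 1).
    have E : ln (INR (P n)) / ln (INR n) = A n * (1 + (ln (INR (P n)) / (A n * ln (INR n)) - 1)) by field; lra.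
    rewrite E. apply: Rmult_le_compat_l; lra.
  + rewrite /Rpower. have -> : ln (INR (P n)) / ln (INR n) * ln (INR n) = ln (INR (P n)) by field; lra.
    rewrite exp_ln; lra.
Qed.

Import Corelib.Init.Peano.
Open Scope R_scope.
Theorem proposition3
  (psi : nat -> R) (d : nat -> nat)
  (psi_ge1 : forall n : nat, 1 <= psi n)
  (psi_inf : is_lim_seq psi p_infty)
  (psi_slow : is_lim_seq (fun n => ln (psi n) / ln (INR n)) 0)
  (d_pos : forall n : nat, (0 < d n)%nat)
  (d_big : forall n : nat, INR n / psi n <= INR (d n)) :
  (exists eps : nat -> R, is_lim_seq eps 0 /\
     exists N : nat, forall n : nat, (N <= n)%nat ->
       Rpower (INR n)
         ((INR n + INR n * ln (INR (d n)) / (psi n * ln (INR n))) * (1 + eps n))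
       <= INR (p (d n) (S n)))
  /\
  (is_lim_seq (fun n => ln (INR (d n)) / (psi n * ln (INR n))) 0 ->
   exists eps : nat -> R, is_lim_seq eps 0 /\
     exists N : nat, forall n : nat, (N <= n)%nat ->
       Rpower (INR n) (INR n + eps n * INR n) <= INR (p (d n) n)).
Proof.
have Heta : forall del, 0 < del -> 0 < Rmin (del / 9) (1 / 9) /\ Rmin (del / 9) (1 / 9) <= 1 / 9
    /\ 1 - del <= 1 - 9 * Rmin (del / 9) (1 / 9).
  move=> del Hd; split; first by apply: Rmin_pos; lra.
  split; first by apply: Rmin_r.
  have := Rmin_l (del / 9) (1 / 9). lra.
split.
- apply: (gen (fun n => p (d n) (S n))
    (fun n => INR n + INR n * ln (INR (d n)) / (psi n * ln (INR n)))).
  + move=> n Hn /=.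
    have H2 : 2 <= INR n by apply: (le_INR 2).
    have HL : 0 < ln (INR n) by rewrite -ln_1; apply: ln_increasing; lra.
    have HD : 0 <= ln (INR (d n)).
      rewrite -ln_1; apply: ln_le; first lra. by apply: (le_INR 1); apply: d_pos.
    have := psi_ge1 n => Hp.
    have : 0 <= INR n * ln (INR (d n)) / (psi n * ln (INR n)).
      apply: Rmult_le_pos; first by apply: Rmult_le_pos; lra.
      apply: Rlt_le; apply: Rinv_0_lt_compat; apply: Rmult_lt_0_compat; lra.
    lra.
  + move=> del Hd.
    have [He [He9 Hdel]] := Heta del Hd.
    have [N HN] := EF psi psi_ge1 psi_inf psi_slow _ He.
    exists N => n Hn.
    have [Ha [Hb [Hc [Hd3 [He16 Hf]]]]] := HN n Hn.
    have [Hp1 Hp2] := det1 n (d n) (psi n) _ He He9 (psi_ge1 n) Ha Hb Hc Hd3 He16 Hf (d_big n) (d_pos n).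
    split => //.
    have HL : 0 < ln (INR n) by rewrite -ln_1; apply: ln_increasing; lra.
    have Hp := psi_ge1 n.
    have -> : (INR n + INR n * ln (INR (d n)) / (psi n * ln (INR n))) * ln (INR n)
       = INR n * ln (INR n) + INR n * ln (INR (d n)) / psi n by field; lra.
    have HD : 0 <= ln (INR (d n)).
      rewrite -ln_1; apply: ln_le; first lra. by apply: (le_INR 1); apply: d_pos.
    have : 0 <= INR n * ln (INR n) + INR n * ln (INR (d n)) / psi n.
      apply: Rplus_le_le_0_compat; first by apply: Rmult_le_pos; lra.
      apply: Rmult_le_pos; first by apply: Rmult_le_pos; lra.
      apply: Rlt_le; apply: Rinv_0_lt_compat; lra.
    move=> H0.
    have := Rmult_le_compat_r _ _ _ H0 Hdel. lra.
- move=> _.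
  have Hm2 : forall del, 0 < del -> exists N, forall n, (N <= n)%coq_nat ->
      1 <= INR (p (d n) n) /\ (1 - del) * (INR n * ln (INR n)) <= ln (INR (p (d n) n)).
    move=> del Hd.
  have [He [He9 Hdel]] := Heta del Hd.
  have [N HN] := EF psi psi_ge1 psi_inf psi_slow _ He.
  exists N => n Hn.
  have [Ha [Hb [Hc [Hd3 [He16 Hf]]]]] := HN n Hn.
  have [Hp1 Hp2] := det2 n (d n) (psi n) _ He He9 (psi_ge1 n) Ha Hb Hc Hd3 He16 Hf (d_big n) (d_pos n).
  split => //.
  have HL : 0 < ln (INR n) by rewrite -ln_1; apply: ln_increasing; lra.
  have H0 : 0 <= INR n * ln (INR n) by apply: Rmult_le_pos; lra.
  have := Rmult_le_compat_r _ _ _ H0 Hdel. lra.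
  have [eps [Heps [N HN]]] := gen (fun n => p (d n) n) INR (fun n _ => Rle_refl _) Hm2.
  exists eps; split => //; exists N => n Hn.
  have -> : INR n + eps n * INR n = INR n * (1 + eps n) by ring.
  exact: HN.
Qed.
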